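(* The algorithm $\mathcal{U}$ described in the context is wait-free: in every execution (implementation history) of $\mathcal{U}$, no process can invoke DoOp$(o)$ and then take infinitely many steps within DoOp$(o)$ without completing it (i.e. without executing line 14).
   Context: Model: an asynchronous shared-memory system with possibly infinitely many processes, any of which may crash, communicating via atomic shared objects. A fetch-and-increment (F\&I) object stores an integer; F\&I$(C)$ atomically returns the current value and increments it. A generalized-compare-and-swap (GCAS) object $O$ stores a value and supports Read$(O)$ and GCAS$(c, O, v_1, v_2)$, which atomically does: if $c(\text{current value of } O, v_1)$ holds then set $O := v_2$ and return true, else return false. Tuples are compared componentwise for $=$; GCAS$(>, A, (t,-,-), v)$ succeeds iff the time field of $A$ is strictly greater than $t$. Implemented type $\mathcal{T} = (OP, RES, Q, \delta)$ with $\delta \subseteq Q\times OP\times Q\times RES$ and initial state $s_0$; a procedure $apply_{\mathcal{T}}(o,s)$ returns some $(s',r)$ with $(s,o,s',r)\in\delta$. $NULL$ is a value different from every response of $\mathcal{T}$, and $NOOP$ is a name different from every operation of $\mathcal{T}$. Algorithm $\mathcal{U}$: each process $p$ owns a GCAS object $H_p$ with fields $(time, response)$. Shared objects: F\&I object $C$, initially $1$; GCAS object $A$ with fields $(time, op, ptr)$, initially $(0, NOOP, h(NOOP))$, where $h(NOOP)$ is a pointer to an immutable location containing $(0,\perp)$; GCAS object $S$ with fields $(time, state, response, ptr)$, initially $(0, s_0, \perp, h(NOOP))$. Process $p$ performs operation $o$ by calling DoOp$(o)$: (1) DoOp$(o)$ invoked; (2) $t := $ F\&I$(C)$; (3) $H_p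 := (t, NULL)$; (4) while $H_p = (t, NULL)$ do: (5) $(t^*, s^*, r^*, roptr^* ) := S$; (6) GCAS$(=, *roptr^*, (t^*, NULL), (t^*, r^* ))$; (7) GCAS$(>, A, (t,-,-), (t, o, \&H_p))$; (8) $(t', o', roptr') := A$; (9) $(\hat t, \hat r) := *roptr'$; (10) if $(\hat t,\hat r) = (t', NULL)$ then (11) $(s', r') := apply_{\mathcal{T}}(o', s^* )$; (12) GCAS$(=, S, (t^*,s^*,r^*,roptr^* ), (t', s', r', roptr'))$; (13) else GCAS$(=, A, (t', o', roptr'), (t, o, \&H_p))$; end while; (14) return $H_p.response$. Lines 1 and 14 are the invocation and response steps. *)

(* Defs.v *)
(* an operational model of algorithm U (asynchronous shared
   memory, processes indexed by nat, crashes = simply not being scheduled). *)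
From Stdlib Require Import Arith.

Set Implicit Arguments.

Section AlgoU.
Variables (OP RES Q : Type).

Inductive resp := RNull | RBot | RVal (r : RES).
Inductive aop := ANoop | AOp (o : OP).
(* pointers: h(NOOP) (immutable location holding (0,bottom)) or &H_q *)
Inductive ptr := PNoop | PH (q : nat).

Definition Aval := (nat * aop * ptr)%type.          (* (time, op, ptr) *)
Definition Sval := (nat * Q * resp * ptr)%type.     (* (time, state, response, ptr) *)
Definition Hval := (nat * resp)%type.               (* (time, response) *)

(* program counter of a process together with its local variables;
   AtK means "the next step to execute is line K". *)
Inductive lstate :=
| Idle                                                  (* not inside DoOp *)
| At2 (o : OP)
| At3 (o : OP) (t : nat)
| At4 (o : OP) (t : nat)
| At5 (o : OP) (t : nat)
| At6 (o : OP) (t : nat) (snap : Sval)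
| At7 (o : OP) (t : nat) (snap : Sval)
| At8 (o : OP) (t : nat) (snap : Sval)
| At9 (o : OP) (t : nat) (snap : Sval) (a : Aval)
| At10 (o : OP) (t : nat) (snap : Sval) (a : Aval) (hv : Hval)
| At11 (o : OP) (t : nat) (snap : Sval) (a : Aval)
| At12 (o : OP) (t : nat) (snap : Sval) (a : Aval) (s' : Q) (r' : RES)
| At13 (o : OP) (t : nat) (snap : Sval) (a : Aval)
| At14 (o : OP) (t : nat).

Record config := Config {
  cC : nat;                 (* F&I object C *)
  cA : Aval;
  cS : Sval;
  cH : nat -> Hval;         (* GCAS objects H_p *)
  cL : nat -> lstate
}.

Definition upd {T : Type} (f : nat -> T) (i : nat) (v : T) : nat -> T :=
  fun j => if Nat.eqb j i then v else f j.

Definition setL (c : config) (p : nat) (l : lstate) : config :=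
  Config (cC c) (cA c) (cS c) (cH c) (upd (cL c) p l).

Definition deref (c : config) (x : ptr) : Hval :=
  match x with PNoop => (0, RBot) | PH q => cH c q end.

(* effect of GCAS(=, O, v1, v2) on the value of O: cur -> new *)
Definition gcas_eq {T : Type} (cur v1 v2 new : T) : Prop :=
  (cur = v1 /\ new = v2) \/ (cur <> v1 /\ new = cur).

Variable delta : Q -> OP -> Q -> RES -> Prop.

(* one atomic step of process p (one line of the code) *)
Definition stepP (p : nat) (c c' : config) : Prop :=
  match cL c p with
  | Idle => exists o, c' = setL c p (At2 o)
  | At2 o =>
      c' = Config (S (cC c)) (cA c) (cS c) (cH c) (upd (cL c) p (At3 o (cC c)))
  | At3 o t =>
      c' = Config (cC c) (cA c) (cS c) (upd (cH c) p (t, RNull)) (upd (cL c) p (At4 o t))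
  | At4 o t =>
      (cH c p = (t, RNull) /\ c' = setL c p (At5 o t)) \/
      (cH c p <> (t, RNull) /\ c' = setL c p (At14 o t))
  | At5 o t => c' = setL c p (At6 o t (cS c))
  | At6 o t snap =>
      let '(ts, ss, rs, rp) := snap in
      match rp with
      | PNoop => c' = setL c p (At7 o t snap)  (* immutable (0,bot): never (ts,NULL) *)
      | PH q => exists nv, gcas_eq (cH c q) (ts, RNull) (ts, rs) nv /\
          c' = Config (cC c) (cA c) (cS c) (upd (cH c) q nv) (upd (cL c) p (At7 o t snap))
      end
  | At7 o t snap =>
      let '(ta, _, _) := cA c in
      let nA := if Nat.ltb t ta then (t, AOp o, PH p) else cA c in
      c' = Config (cC c) nA (cS c) (cH c) (upd (cL c) p (At8 o t snap))
  | At8 o t snap => c' = setL c p (At9 o t snap (cA c))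
  | At9 o t snap a =>
      let '(_, _, rp') := a in c' = setL c p (At10 o t snap a (deref c rp'))
  | At10 o t snap a hv =>
      let '(t', _, _) := a in
      (hv = (t', RNull) /\ c' = setL c p (At11 o t snap a)) \/
      (hv <> (t', RNull) /\ c' = setL c p (At13 o t snap a))
  | At11 o t snap a =>
      let '(_, o', _) := a in
      let '(_, ss, _, _) := snap in
      match o' with
      | ANoop => False   (* unreachable: apply_T is only defined on operations of T *)
      | AOp op => exists s' r', delta ss op s' r' /\ c' = setL c p (At12 o t snap a s' r')
      end
  | At12 o t snap a s' r' =>
      let '(t', _, rp') := a in
      exists nS, gcas_eq (cS c) snap (t', s', RVal r', rp') nS /\
        c' = Config (cC c) (cA c) nS (cH c) (upd (cL c) p (At4 o t))
  | At13 o t snap a =>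
      exists nA, gcas_eq (cA c) a (t, AOp o, PH p) nA /\
        c' = Config (cC c) nA (cS c) (cH c) (upd (cL c) p (At4 o t))
  | At14 o t => c' = setL c p Idle
  end.

(* an execution step: either process p takes a step, or nothing happens
   (stuttering; allows finite executions to be padded) *)
Definition stepE (e : option nat) (c c' : config) : Prop :=
  match e with None => c' = c | Some p => stepP p c c' end.

Definition is_at14 (l : lstate) : Prop :=
  match l with At14 _ _ => True | _ => False end.

End AlgoU.

Definition init (OP RES Q : Type) (s0 : Q) (H0 : nat -> Hval RES) : config OP RES Q :=
  Config 1 (0, ANoop OP, PNoop) (0, s0, RBot RES, PNoop) H0 (fun _ => Idle OP RES Q).

(* Main.v *)
Require Import Defs.
From Stdlib Require Import Arith Lia Classical ClassicalEpsilon.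

Section Proofs.
Variables (OP RES Q : Type).
Variable delta : Q -> OP -> Q -> RES -> Prop.

Local Arguments Idle {OP RES Q}.
Local Arguments At2 {OP RES Q}.
Local Arguments At3 {OP RES Q}.
Local Arguments At4 {OP RES Q}.
Local Arguments At5 {OP RES Q}.
Local Arguments At6 {OP RES Q}.
Local Arguments At7 {OP RES Q}.
Local Arguments At8 {OP RES Q}.
Local Arguments At9 {OP RES Q}.
Local Arguments At10 {OP RES Q}.
Local Arguments At11 {OP RES Q}.
Local Arguments At12 {OP RES Q}.
Local Arguments At13 {OP RES Q}.
Local Arguments At14 {OP RES Q}.
Local Arguments RNull {RES}.
Local Arguments RBot {RES}.
Local Arguments ANoop {OP}.

Notation L := (lstate OP RES Q).
Notation Cf := (config OP RES Q).

Definition timeOf (l : L) : option nat := match l with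
 | Idle | At2 _ => None
 | At3 _ t | At4 _ t | At5 _ t | At6 _ t _ | At7 _ t _ | At8 _ t _ | At9 _ t _ _
 | At10 _ t _ _ _ | At11 _ t _ _ | At12 _ t _ _ _ _ | At13 _ t _ _ | At14 _ t => Some t end.

Definition snapOf (l : L) : option (Sval RES Q) := match l with
 | At6 _ _ s | At7 _ _ s | At8 _ _ s | At9 _ _ s _
 | At10 _ _ s _ _ | At11 _ _ s _ | At12 _ _ s _ _ _ | At13 _ _ s _ => Some s
 | _ => None end.

Definition snapD (l : L) : option (Sval RES Q) := match l with
 | At7 _ _ s | At8 _ _ s | At9 _ _ s _
 | At10 _ _ s _ _ | At11 _ _ s _ | At12 _ _ s _ _ _ | At13 _ _ s _ => Some s
 | _ => None end.

Definition aOf (l : L) : option (Aval OP) := match l with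
 | At9 _ _ _ a | At10 _ _ _ a _ | At11 _ _ _ a | At12 _ _ _ a _ _ | At13 _ _ _ a => Some a
 | _ => None end.

Definition sent (s : Sval RES Q) : nat * ptr := (fst (fst (fst s)), snd s).
Definition aent (a : Aval OP) : nat * ptr := (fst (fst a), snd a).

Definition storedIn (c : Cf) (e : nat * ptr) : Prop :=
  e = aent (cA c) \/ e = sent (cS c) \/
  (exists q s, snapOf (cL c q) = Some s /\ e = sent s) \/
  (exists q a, aOf (cL c q) = Some a /\ e = aent a).

Definition done (c : Cf) (e : nat * ptr) : Prop := deref c (snd e) <> (fst e, RNull).

Definition snapOK (s : Sval RES Q) : Prop := snd s = PNoop \/ snd (fst s) <> RNull.

Definition aD (c : Cf) (l : L) : Prop := match l with
 | At13 _ _ _ a => done c (aent a)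
 | At10 _ _ _ a hv => hv <> (fst (fst a), RNull) -> done c (aent a)
 | _ => True end.

Record Inv (c : Cf) : Prop := {
  I1 : forall q t, timeOf (cL c q) = Some t -> t < cC c;
  I2 : forall q r t, timeOf (cL c q) = Some t -> timeOf (cL c r) = Some t -> q = r;
  I3 : forall e, storedIn c e -> fst e < cC c;
  I4 : forall q o t e, cL c q = At3 o t -> storedIn c e -> snd e = PH q -> fst e < t;
  I5a : snapOK (cS c);
  I5b : forall q s, snapOf (cL c q) = Some s -> snapOK s;
  I6 : forall q s, snapD (cL c q) = Some s -> done c (sent s);
  I7 : forall q, aD c (cL c q)
}.

Lemma upd_eq {T} (f : nat -> T) i v : upd f i v i = v.
Proof. unfold upd. now rewrite Nat.eqb_refl. Qed.
Lemma upd_neq {T} (f : nat -> T) i v j : j <> i -> upd f i v j = f j.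
Proof. unfold upd. intros H. destruct (Nat.eqb_spec j i); congruence. Qed.

Ltac dlets := repeat match goal with
     | H : context [let '(_,_) := ?x in _] |- _ => destruct x
     | H : context [match ?x with PNoop => _ | PH _ => _ end] |- _ => destruct x
     | H : context [match ?x with ANoop => _ | AOp _ => _ end] |- _ => destruct x
     end.
Ltac brk := repeat match goal with
  | H : exists _, _ |- _ => destruct H
  | H : _ /\ _ |- _ => destruct H
  | H : _ \/ _ |- _ => destruct H
  | H : gcas_eq _ _ _ _ |- _ => destruct H
  end.
Ltac dstep Hs Hl :=
  unfold stepP in Hs; destruct (cL _ _) eqn:Hl in Hs; dlets; brk; subst; simpl in *.

Ltac updsplit := repeat match goal with
  | H : context [upd _ ?p _ ?q] |- _ => unfold upd in H; destruct (Nat.eqb_spec q p)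
  | |- context [upd _ ?p _ ?q] => unfold upd; destruct (Nat.eqb_spec q p)
  end.

Lemma step_other p c c' q : stepP delta p c c' -> q <> p -> cL c' q = cL c q.
Proof.
  intros Hs Hq. dstep Hs Hl; try (rewrite upd_neq; auto); try contradiction.
Qed.

Ltac clean := repeat match goal with
  | H : Some _ = Some _ |- _ => injection H as H; subst
  | H : None = Some _ |- _ => discriminate H
  | H : Some _ = None |- _ => discriminate H
  | H : context [if ?b then _ else _] |- _ => destruct b
  | |- context [if ?b then _ else _] => destruct b
  end.

Lemma stored_step p c c' e : stepP delta p c c' -> storedIn c' e ->
  storedIn c e \/ (exists t, timeOf (cL c p) = Some t /\ e = (t, PH p)).
Proof.
  intros Hs He. unfold storedIn in *.
  dstep Hs Hl; try contradiction; brk; updsplit; subst; simpl in *; clean; simpl in *;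
  first [ solve [eauto 10]
        | solve [left; right; right; left; exists p; eexists; rewrite Hl; simpl; eauto]
        | solve [left; right; right; right; exists p; eexists; rewrite Hl; simpl; eauto]
        | solve [right; eexists; rewrite Hl; simpl; eauto]
        | idtac ].
Qed.

Lemma done_step p c c' e : Inv c -> stepP delta p c c' -> storedIn c e -> done c e -> done c' e.
Proof.
  intros HI Hs He Hd. destruct e as [te xe].
  pose proof (I4 _ HI) as H4.
  unfold done, deref in *; simpl in *. destruct xe as [|r]; [|].
  { dstep Hs Hl; auto. }
  dstep Hs Hl; try contradiction; simpl in *; auto; updsplit; subst; auto.
  - specialize (H4 _ _ _ _ Hl He eq_refl). simpl in H4. intros E; injection E; lia.
  - intros E; injection E as E1 E2; subst. congruence.
Qed.

Lemma C_mono p c c' : stepP delta p c c' -> cC c <= cC c'.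
Proof. intros Hs. dstep Hs Hl; lia. Qed.

Lemma stored_snap c q s : snapOf (cL c q) = Some s -> storedIn c (sent s).
Proof. intros H. unfold storedIn. eauto 10. Qed.
Lemma stored_a c q a : aOf (cL c q) = Some a -> storedIn c (aent a).
Proof. intros H. unfold storedIn. eauto 10. Qed.
Lemma snapD_snapOf (l : L) s : snapD l = Some s -> snapOf l = Some s.
Proof. destruct l; simpl; congruence. Qed.

Lemma aD_mono p c c' (l : L) q : Inv c -> stepP delta p c c' -> cL c q = l -> aD c l -> aD c' l.
Proof.
  intros HI Hs Hq H. destruct l; simpl in *; auto.
  - intros Hh. eapply done_step; eauto. eapply (stored_a c q); rewrite Hq; reflexivity.
  - eapply done_step; eauto. eapply (stored_a c q); rewrite Hq; reflexivity.
Qed.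

Lemma time_step p c c' : stepP delta p c c' ->
  timeOf (cL c' p) = timeOf (cL c p) \/ timeOf (cL c' p) = None \/
  (timeOf (cL c p) = None /\ timeOf (cL c' p) = Some (cC c)).
Proof. intros Hs. dstep Hs Hl; rewrite ?upd_eq; simpl; auto; try contradiction. all: try rewrite Hl; auto. Qed.

Lemma at3_step p c c' o t : stepP delta p c c' -> cL c' p = At3 o t -> cL c p = At2 o /\ t = cC c.
Proof. intros Hs H. dstep Hs Hl; rewrite ?upd_eq in H; try discriminate; try contradiction.
  injection H as -> ->; auto. Qed.

Lemma inv_step p c c' : Inv c -> stepP delta p c c' -> Inv c'.
Proof.
  intros HI Hs.
  pose proof (C_mono _ _ _ Hs) as HC.
  pose proof (fun e => stored_step p c c' e Hs) as HSt.
  pose proof (fun q => step_other p c c' q Hs) as HO.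
  pose proof (fun e => done_step p c c' e HI Hs) as HD.
  destruct HI as [H1 H2 H3 H4 H5a H5b H6 H7].
  constructor.
  - intros q t Ht. destruct (Nat.eqb_spec q p) as [->|Hne].
    + dstep Hs Hl; rewrite ?upd_eq in Ht; simpl in Ht; clean; try contradiction;
      try (specialize (H1 p); rewrite Hl in H1; simpl in H1; specialize (H1 _ eq_refl)); lia.
    + rewrite HO in Ht by auto. specialize (H1 _ _ Ht). lia.
  - pose proof (time_step _ _ _ Hs) as HT.
    assert (Hp : forall r t, r <> p -> timeOf (cL c' p) = Some t -> timeOf (cL c' r) = Some t -> p = r).
    { intros r t Hne Hp Hr. rewrite HO in Hr by auto.
      destruct HT as [HT|[HT|[_ HT]]]; rewrite HT in Hp; try discriminate.
      - eauto.
      - injection Hp as <-. specialize (H1 _ _ Hr). lia. }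
    intros q r t Hq Hr.
    destruct (Nat.eqb_spec q p) as [->|Hq']; destruct (Nat.eqb_spec r p) as [->|Hr']; auto.
    + eapply Hp; eauto.
    + symmetry; eapply Hp; eauto.
    + rewrite HO in Hq, Hr by auto. eauto.
  - intros e He. destruct (HSt _ He) as [He'|[t [Ht ->]]].
    + specialize (H3 _ He'). lia.
    + specialize (H1 _ _ Ht). simpl. lia.
  - intros q o t e Hq He Hx. destruct (Nat.eqb_spec q p) as [->|Hne].
    + destruct (at3_step _ _ _ _ _ Hs Hq) as [Hl ->].
      destruct (HSt _ He) as [He'|[t' [Ht ->]]].
      * eauto.
      * rewrite Hl in Ht; discriminate.
    + rewrite HO in Hq by auto. destruct (HSt _ He) as [He'|[t' [Ht ->]]].
      * eauto.
      * simpl in Hx. congruence.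
  - unfold snapOK in *. dstep Hs Hl; auto; try contradiction. all: right; discriminate.
  - intros q s Hq. destruct (Nat.eqb_spec q p) as [->|Hne].
    + dstep Hs Hl; rewrite ?upd_eq in Hq; simpl in Hq; clean;
      try contradiction; auto; pose proof (H5b p) as Hp5; rewrite Hl in Hp5; simpl in Hp5; eauto.
    + rewrite HO in Hq by auto. eauto.
  - intros q s Hq. destruct (Nat.eqb_spec q p) as [->|Hne].
    + dstep Hs Hl; rewrite ?upd_eq in Hq; simpl in Hq; clean; try contradiction;
      pose proof (H5b p) as Hp5; pose proof (H6 p) as Hp6; rewrite Hl in Hp5, Hp6; simpl in Hp5, Hp6.
      all: try (apply HD; [eapply (stored_snap c p); rewrite Hl; reflexivity | apply Hp6; reflexivity]).
      all: unfold done, deref; simpl; rewrite ?upd_eq; try discriminate.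
      * destruct (Hp5 _ eq_refl) as [Hx|Hx]; simpl in Hx; [discriminate|]. congruence.
      * auto.
    + rewrite HO in Hq by auto. apply HD; eauto. eapply stored_snap. apply snapD_snapOf; eauto.
  - intros q. destruct (Nat.eqb_spec q p) as [->|Hne].
    + pose proof (H7 p) as Hp7. dstep Hs Hl; rewrite ?upd_eq; simpl; auto; try contradiction;
      rewrite ?Hl in Hp7; simpl in Hp7.
      apply HD; [eapply (stored_a c p); rewrite Hl; reflexivity| apply Hp7; auto].
    + rewrite HO by auto. eapply aD_mono; eauto. constructor; auto.
Qed.

Lemma inv_init s0 H0 : Inv (init OP s0 H0).
Proof.
  constructor; simpl; try (intros; discriminate); auto.
  - intros e He. unfold storedIn in He; simpl in He; brk; subst; simpl; auto; discriminate.
  - left; reflexivity.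
Qed.

Definition opTime (l : L) : option (OP * nat) := match l with
 | Idle | At2 _ => None
 | At3 o t | At4 o t | At5 o t | At6 o t _ | At7 o t _ | At8 o t _ | At9 o t _ _
 | At10 o t _ _ _ | At11 o t _ _ | At12 o t _ _ _ _ | At13 o t _ _ | At14 o t => Some (o, t) end.

Lemma timeOf_opTime (l : L) t : timeOf l = Some t -> exists o, opTime l = Some (o, t).
Proof. destruct l; simpl; intros H; try discriminate; injection H as ->; eauto. Qed.
Lemma opTime_timeOf (l : L) o t : opTime l = Some (o, t) -> timeOf l = Some t.
Proof. destruct l; simpl; intros H; try discriminate; injection H as -> ->; eauto. Qed.

Lemma optime_step p c c' x : stepP delta p c c' -> opTime (cL c p) = Some x ->
  ~ is_at14 (cL c p) -> opTime (cL c' p) = Some x.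
Proof. intros Hs Ho H14. dstep Hs Hl; rewrite ?upd_eq; rewrite ?Hl in Ho, H14; simpl in *; try contradiction; try discriminate; auto. Qed.


Ltac tr Hs H := unfold stepP in Hs; rewrite H in Hs; simpl in Hs.
Lemma tr4 (p : nat) (c c' : Cf) (o : OP) (t : nat) (Hs : stepP delta p c c') : cL c p = At4 o t -> (cH c p = (t, RNull) /\ cL c' p = At5 o t) \/
   (cH c p <> (t, RNull) /\ cL c' p = At14 o t).
Proof. intros H. tr Hs H. destruct Hs as [[A B]|[A B]]; subst; simpl; rewrite upd_eq; auto. Qed.
Lemma tr5 (p : nat) (c c' : Cf) (o : OP) (t : nat) (Hs : stepP delta p c c') : cL c p = At5 o t -> cL c' p = At6 o t (cS c).
Proof. intros H. tr Hs H. subst; simpl; rewrite upd_eq; auto. Qed.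
Lemma tr6 (p : nat) (c c' : Cf) (o : OP) (t : nat) s (Hs : stepP delta p c c') : cL c p = At6 o t s -> cL c' p = At7 o t s.
Proof. intros H. tr Hs H. destruct s as [[[? ?] ?] [|?]]; brk; subst; simpl; rewrite upd_eq; auto. Qed.
Lemma tr7 (p : nat) (c c' : Cf) (o : OP) (t : nat) s (Hs : stepP delta p c c') : cL c p = At7 o t s -> cL c' p = At8 o t s /\
  cA c' = if t <? fst (fst (cA c)) then (t, AOp o, PH p) else cA c.
Proof. intros H. tr Hs H. destruct (cA c) as [[? ?] ?]. subst; simpl; rewrite upd_eq; auto. Qed.
Lemma tr8 (p : nat) (c c' : Cf) (o : OP) (t : nat) s (Hs : stepP delta p c c') : cL c p = At8 o t s -> cL c' p = At9 o t s (cA c).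
Proof. intros H. tr Hs H. subst; simpl; rewrite upd_eq; auto. Qed.
Lemma tr9 (p : nat) (c c' : Cf) (o : OP) (t : nat) s a (Hs : stepP delta p c c') : cL c p = At9 o t s a -> cL c' p = At10 o t s a (deref c (snd a)).
Proof. intros H. tr Hs H. destruct a as [[? ?] ?]. subst; simpl; rewrite upd_eq; auto. Qed.
Lemma tr10 (p : nat) (c c' : Cf) (o : OP) (t : nat) s a hv (Hs : stepP delta p c c') : cL c p = At10 o t s a hv ->
  (hv = (fst (fst a), RNull) /\ cL c' p = At11 o t s a) \/
  (hv <> (fst (fst a), RNull) /\ cL c' p = At13 o t s a).
Proof. intros H. tr Hs H. destruct a as [[? ?] ?]. brk; subst; simpl; rewrite upd_eq; auto. Qed.
Lemma tr11 (p : nat) (c c' : Cf) (o : OP) (t : nat) s a (Hs : stepP delta p c c') : cL c p = At11 o t s a -> exists s' r', cL c' p = At12 o t s a s' r'.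
Proof. intros H. tr Hs H. destruct a as [[? [|?]] ?]; destruct s as [[[? ?] ?] ?]; try contradiction.
  brk; subst; simpl; rewrite upd_eq; eauto. Qed.
Lemma tr12 (p : nat) (c c' : Cf) (o : OP) (t : nat) s a s' r' (Hs : stepP delta p c c') : cL c p = At12 o t s a s' r' ->
  ((cS c = s /\ cS c' = (fst (fst a), s', RVal r', snd a)) \/ (cS c <> s /\ cS c' = cS c)) /\
  cL c' p = At4 o t.
Proof. intros H. tr Hs H. destruct a as [[? ?] ?]. brk; subst; simpl; rewrite upd_eq; auto. Qed.
Lemma tr13 (p : nat) (c c' : Cf) (o : OP) (t : nat) s a (Hs : stepP delta p c c') : cL c p = At13 o t s a ->
  ((cA c = a /\ cA c' = (t, AOp o, PH p)) \/ (cA c <> a /\ cA c' = cA c)) /\ cL c' p = At4 o t.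
Proof. intros H. tr Hs H. brk; subst; simpl; rewrite upd_eq; auto. Qed.

Section Exec.
Variables (cfg : nat -> Cf) (sched : nat -> option nat) (s0 : Q) (H0 : nat -> Hval RES).
Hypothesis Hinit : cfg 0 = init OP s0 H0.
Hypothesis Hstep : forall k, stepE delta (sched k) (cfg k) (cfg (S k)).

Lemma inv_all k : Inv (cfg k).
Proof.
  induction k. { rewrite Hinit. apply inv_init. }
  specialize (Hstep k). destruct (sched k) as [q|]; simpl in Hstep.
  - eapply inv_step; eauto.
  - rewrite Hstep; auto.
Qed.

Lemma frame k p : sched k <> Some p -> cL (cfg (S k)) p = cL (cfg k) p.
Proof.
  intros Hne. specialize (Hstep k). destruct (sched k) as [q|]; simpl in Hstep.
  - eapply step_other; [eauto|congruence].
  - rewrite Hstep; auto.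
Qed.

Lemma Cmono1 k : cC (cfg k) <= cC (cfg (S k)).
Proof.
  specialize (Hstep k). destruct (sched k) as [q|]; simpl in Hstep.
  - eapply C_mono; eauto.
  - rewrite Hstep; auto.
Qed.

Lemma Cmono j k : j <= k -> cC (cfg j) <= cC (cfg k).
Proof. induction 1; auto. pose proof (Cmono1 m). lia. Qed.

Definition sched_io p := forall m, exists k, m <= k /\ sched k = Some p.

Lemma advance p k : sched_io p -> exists j, k <= j /\ cL (cfg j) p = cL (cfg k) p /\
  sched j = Some p /\ stepP delta p (cfg j) (cfg (S j)).
Proof.
  intros Hio. destruct (Hio k) as [m [Hkm Hm]].
  assert (G : forall d k, sched (d + k) = Some p ->
     exists j, k <= j /\ cL (cfg j) p = cL (cfg k) p /\ sched j = Some p).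
  { induction d; intros k' Hs.
    - exists k'; auto.
    - destruct (sched k') as [q|] eqn:E.
      + destruct (Nat.eq_dec q p) as [->|Hne].
        * exists k'; auto.
        * destruct (IHd (S k')) as [j [Hj1 [Hj2 Hj3]]]. { rewrite <- Hs. f_equal. lia. }
          exists j; split; [lia|]. rewrite Hj2, frame; auto. congruence.
      + destruct (IHd (S k')) as [j [Hj1 [Hj2 Hj3]]]. { rewrite <- Hs. f_equal. lia. }
          exists j; split; [lia|]. rewrite Hj2, frame; auto. congruence. }
  destruct (G (m - k) k) as [j [Hj1 [Hj2 Hj3]]]. { rewrite <- Hm. f_equal. lia. }
  exists j; split; auto; split; auto; split; auto. specialize (Hstep j). rewrite Hj3 in Hstep. exact Hstep.
Qed.


Lemma time1 k q t' : timeOf (cL (cfg (S k)) q) = Some t' ->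
  timeOf (cL (cfg k) q) = Some t' \/ t' = cC (cfg k).
Proof.
  intros H. destruct (sched k) as [r|] eqn:E.
  - destruct (Nat.eq_dec r q) as [->|Hne].
    + pose proof (Hstep k) as Hs. rewrite E in Hs. simpl in Hs.
      destruct (time_step _ _ _ Hs) as [A|[A|[_ A]]]; rewrite A in H; try discriminate; auto.
      injection H; auto.
    + rewrite frame in H; auto. congruence.
  - rewrite frame in H; auto. congruence.
Qed.

Lemma time_back q t' j k : j <= k -> timeOf (cL (cfg k) q) = Some t' -> t' < cC (cfg j) ->
  timeOf (cL (cfg j) q) = Some t'.
Proof.
  induction 1; intros Ht Hlt; auto.
  destruct (time1 _ _ _ Ht) as [A|A]; auto.
  pose proof (Cmono _ _ H). lia.
Qed.

Lemma active_bound k : exists N, forall q, N <= q -> cL (cfg k) q = Idle.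
Proof.
  induction k.
  - exists 0. intros q _. rewrite Hinit. reflexivity.
  - destruct IHk as [N HN]. destruct (sched k) as [r|] eqn:E.
    + exists (Nat.max N (S r)). intros q Hq. rewrite frame. apply HN; lia. rewrite E. intros F; injection F; lia.
    + exists N. intros q Hq. rewrite frame. auto. congruence.
Qed.

Definition Ptime t := forall p n, timeOf (cL (cfg n) p) = Some t -> sched_io p ->
  exists k, n <= k /\ sched k = Some p /\ is_at14 (cL (cfg k) p).

Definition dist (l : L) : nat := match l with
 | At3 _ _ => 1 | At4 _ _ => 0 | At5 _ _ => 8 | At6 _ _ _ => 7 | At7 _ _ _ => 6
 | At8 _ _ _ => 5 | At9 _ _ _ _ => 4 | At10 _ _ _ _ _ => 3 | At11 _ _ _ _ => 2
 | At12 _ _ _ _ _ _ => 1 | At13 _ _ _ _ => 1 | _ => 0 end.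

Lemma dist_step p c c' x : stepP delta p c c' -> opTime (cL c p) = Some x -> ~ is_at14 (cL c p) ->
  0 < dist (cL c p) -> dist (cL c' p) < dist (cL c p).
Proof.
  intros Hs Ho H14 Hd. dstep Hs Hl; rewrite ?upd_eq; rewrite ?Hl in Ho, H14, Hd; simpl in *;
  try contradiction; try discriminate; try lia; rewrite ?Hl; simpl; lia.
Qed.

Section Live.
Variables (p n t : nat) (o : OP).
Hypothesis Hio : sched_io p.
Hypothesis Hown : opTime (cL (cfg n) p) = Some (o, t).
Hypothesis Hnot : forall k, n <= k -> sched k = Some p -> ~ is_at14 (cL (cfg k) p).
Hypothesis IH : forall t', t' < t -> Ptime t'.

Lemma own_all k : n <= k -> opTime (cL (cfg k) p) = Some (o, t).
Proof.
  induction 1; auto.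
  destruct (sched m) as [r|] eqn:E.
  - destruct (Nat.eq_dec r p) as [->|Hne].
    + pose proof (Hstep m) as Hs. rewrite E in Hs. eapply optime_step; eauto.
    + rewrite frame; auto. congruence.
  - rewrite frame; auto. congruence.
Qed.

Lemma never14 k : n <= k -> ~ is_at14 (cL (cfg k) p).
Proof.
  intros Hk. destruct (advance p k Hio) as [j [Hj1 [Hj2 [Hj3 _]]]].
  rewrite <- Hj2. apply Hnot; auto; lia.
Qed.

Lemma reach4 k : n <= k -> exists k', k <= k' /\ cL (cfg k') p = At4 o t.
Proof.
  intros Hk. remember (dist (cL (cfg k) p)) as d eqn:Ed.
  revert k Hk Ed. induction d as [d IHd] using lt_wf_ind. intros k Hk Ed.
  destruct (Nat.eq_dec d 0) as [->|Hd].
  - pose proof (own_all k Hk) as Ho. pose proof (never14 k Hk) as H14.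
    exists k; split; auto. destruct (cL (cfg k) p); simpl in *; try discriminate; try contradiction;
    injection Ho as -> ->; auto.
  - destruct (advance p k Hio) as [j [Hj1 [Hj2 [Hj3 Hj4]]]].
    assert (Hlt : dist (cL (cfg (S j)) p) < d).
    { rewrite Ed, <- Hj2. eapply dist_step; eauto.
      - apply own_all; lia.
      - apply never14; lia.
      - rewrite Hj2. lia. }
    destruct (IHd _ Hlt (S j)) as [k' [Hk1 Hk2]]; auto; try lia.
    exists k'; split; auto; lia.
Qed.


Lemma H_step q c c' r : stepP delta q c c' ->
  cH c' r = cH c r \/ (q = r /\ exists o' t', cL c q = At3 o' t') \/
  (exists ts rs, gcas_eq (cH c r) (ts, RNull) (ts, rs) (cH c' r)).
Proof.
  intros Hs. dstep Hs Hl; auto; try contradiction; updsplit; subst; eauto.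
  all: first [ solve [right; left; eauto]
             | solve [right; right; do 2 eexists; left; split; eauto]
             | solve [right; right; do 2 eexists; right; split; eauto] ].
Qed.

Lemma A_change q c c' : stepP delta q c c' -> cA c' <> cA c ->
  (exists o' t' s, cL c q = At7 o' t' s /\ t' < fst (fst (cA c)) /\ cA c' = (t', AOp o', PH q)) \/
  (exists o' t' s a, cL c q = At13 o' t' s a /\ cA c = a /\ cA c' = (t', AOp o', PH q)).
Proof.
  intros Hs Hne. dstep Hs Hl; try contradiction; try (exfalso; apply Hne; reflexivity).
  - match type of Hne with context [Nat.ltb ?a ?b] => destruct (Nat.ltb_spec a b) end;
      [|exfalso; apply Hne; reflexivity].
    left. simpl. eauto 10.
  - right. eauto 10.
Qed.


Lemma S_change q c c' : stepP delta q c c' -> cS c' <> cS c ->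
  exists o' t' s a s' r', cL c q = At12 o' t' s a s' r' /\ cS c = s /\
    cS c' = (fst (fst a), s', RVal r', snd a) /\ cL c' q = At4 o' t'.
Proof.
  intros Hs Hne. dstep Hs Hl; try contradiction; try (exfalso; apply Hne; reflexivity).
  rewrite upd_eq. do 6 eexists; eauto.
Qed.

Lemma aOf_step q c c' : stepP delta q c c' ->
  aOf (cL c' q) = None \/ aOf (cL c' q) = aOf (cL c q) \/ aOf (cL c' q) = Some (cA c).
Proof. intros Hs. dstep Hs Hl; rewrite ?upd_eq; simpl; auto; try contradiction; rewrite Hl; auto. Qed.

Section Live2.
Variable n4 : nat.
Hypothesis Hn4 : n <= n4.
Hypothesis Hat4 : cL (cfg n4) p = At4 o t.

Definition Dn k := cH (cfg k) p <> (t, RNull).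

Lemma notAt3_all k : n4 <= k -> cL (cfg k) p <> At3 o t.
Proof.
  induction 1. { rewrite Hat4; discriminate. }
  destruct (sched m) as [r|] eqn:E.
  - destruct (Nat.eq_dec r p) as [->|Hne].
    + pose proof (Hstep m) as Hs. rewrite E in Hs. simpl in Hs. intros F.
      destruct (at3_step _ _ _ _ _ Hs F) as [A _].
      pose proof (own_all m ltac:(lia)) as Ho. rewrite A in Ho. discriminate.
    + rewrite frame; auto. congruence.
  - rewrite frame; auto. congruence.
Qed.

Lemma Dmono1 k : n4 <= k -> Dn k -> Dn (S k).
Proof.
  intros Hk HD. unfold Dn in *.
  pose proof (Hstep k) as Hs. destruct (sched k) as [r|] eqn:E; simpl in Hs; [|rewrite Hs; auto].
  destruct (H_step _ _ _ p Hs) as [A|[[-> [o' [t' A]]]|[ts [rs A]]]].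
  - rewrite A; auto.
  - pose proof (own_all k ltac:(lia)) as Ho. rewrite A in Ho.
    simpl in Ho. injection Ho as -> ->. exfalso; eapply notAt3_all; eauto.
  - destruct A as [[A1 A2]|[A1 A2]].
    + rewrite A2. rewrite A1 in HD. intros F; injection F as F1 F2. subst. apply HD; auto.
    + rewrite A2; auto.
Qed.

Lemma Dmono a b : n4 <= a -> a <= b -> Dn a -> Dn b.
Proof. intros Ha. induction 1; auto. intros HD. apply Dmono1; auto. lia. Qed.

Lemma notD k : n4 <= k -> ~ Dn k.
Proof.
  intros Hk HD.
  destruct (reach4 k ltac:(lia)) as [k4 [Hk4 Hs4]].
  destruct (advance p k4 Hio) as [j [Hj1 [Hj2 [Hj3 Hj4]]]].
  assert (HDj : Dn j) by (apply (Dmono k); auto; lia).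
  unfold stepP in Hj4. rewrite Hj2, Hs4 in Hj4.
  destruct Hj4 as [[A _]|[_ A]]; [contradiction|].
  apply (never14 (S j)); [lia|]. rewrite A. simpl. rewrite upd_eq. exact I.
Qed.

Lemma reach5 k : n4 <= k -> exists k', k <= k' /\ cL (cfg k') p = At5 o t.
Proof.
  intros Hk.
  destruct (reach4 k ltac:(lia)) as [k4 [Hk4 Hs4]].
  destruct (advance p k4 Hio) as [j [Hj1 [Hj2 [Hj3 Hj4]]]].
  unfold stepP in Hj4. rewrite Hj2, Hs4 in Hj4.
  destruct Hj4 as [[_ A]|[A _]].
  - exists (S j). split; [lia|]. rewrite A. simpl. apply upd_eq.
  - exfalso. apply (notD j); auto; lia.
Qed.



Lemma t_lt_C : t < cC (cfg n4).
Proof. apply ((I1 _ (inv_all n4)) p). rewrite Hat4. reflexivity. Qed.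

Lemma settled_pre m : exists T, n4 <= T /\ forall k q t', T <= k -> q <> p -> sched k = Some q ->
  timeOf (cL (cfg k) q) = Some t' -> t' < m -> t' < t -> False.
Proof.
  pose proof t_lt_C as HtC.
  induction m.
  - exists n4. split; auto. intros; lia.
  - destruct IHm as [T [HT HTP]].
    assert (Hback : forall k q, n4 <= k -> timeOf (cL (cfg k) q) = Some m -> m < t ->
               timeOf (cL (cfg n4) q) = Some m).
    { intros k q Hk Hq Hm. eapply time_back; eauto. lia. }
    destruct (classic (exists q0, timeOf (cL (cfg n4) q0) = Some m /\ q0 <> p)) as [[q0 [Hq0 Hq0p]]|Hno].
    + destruct (classic (sched_io q0)) as [Hio0|Hnio].
      * destruct (le_lt_dec t m) as [Htm|Htm].
        { exists T; split; auto. intros k q t' Hk Hq Hs Ht' Hlt1 Hlt2. eapply (HTP k q t'); eauto. lia. }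
        destruct (IH m Htm q0 n4 Hq0 Hio0) as [kq [Hkq1 [Hkq2 Hkq3]]].
        assert (Hidle : cL (cfg (S kq)) q0 = Idle).
        { pose proof (Hstep kq) as Hs. rewrite Hkq2 in Hs. simpl in Hs. unfold stepP in Hs.
          destruct (cL (cfg kq) q0); simpl in Hkq3; try contradiction. rewrite Hs. simpl. apply upd_eq. }
        exists (Nat.max T (S kq)). split; [lia|].
        intros k q t' Hk Hq Hs Ht' Hlt1 Hlt2.
        destruct (Nat.eq_dec t' m) as [->|Hne]; [|eapply (HTP k q t'); eauto; lia].
        pose proof (Hback k q ltac:(lia) Ht' Htm) as Hqn4.
        assert (q = q0) as -> by (eapply (I2 _ (inv_all n4)); eauto).
        assert (Hb : timeOf (cL (cfg (S kq)) q0) = Some m).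
        { eapply time_back; [| apply Ht' |]. lia. pose proof (Cmono n4 (S kq) ltac:(lia)). lia. }
        rewrite Hidle in Hb. discriminate.
      * assert (HM : exists M, forall k, M <= k -> sched k <> Some q0).
        { apply not_all_ex_not in Hnio. destruct Hnio as [M HM]. exists M. intros k Hk Hs.
          apply HM. eauto. }
        destruct HM as [M HM].
        exists (Nat.max T M). split; [lia|].
        intros k q t' Hk Hq Hs Ht' Hlt1 Hlt2.
        destruct (Nat.eq_dec t' m) as [->|Hne]; [|eapply (HTP k q t'); eauto; lia].
        pose proof (Hback k q ltac:(lia) Ht' Hlt2) as Hqn4.
        assert (q = q0) as -> by (eapply (I2 _ (inv_all n4)); eauto).
        eapply HM; [|eauto]. lia.
    + exists T. split; auto.
      intros k q t' Hk Hq Hs Ht' Hlt1 Hlt2.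
      destruct (Nat.eq_dec t' m) as [->|Hne]; [|eapply (HTP k q t'); eauto; lia].
      apply Hno. exists q. split; auto. apply (Hback k q); auto. lia.
Qed.

Lemma settled : exists T0, n4 <= T0 /\ forall k q t', T0 <= k -> q <> p -> sched k = Some q ->
  timeOf (cL (cfg k) q) = Some t' -> t < t'.
Proof.
  destruct (settled_pre t) as [T [HT HTP]]. exists T. split; auto.
  intros k q t' Hk Hq Hs Ht'.
  destruct (lt_eq_lt_dec t t') as [[H|H]|H]; auto.
  - rewrite <- H in Ht'. exfalso. apply Hq. eapply (I2 _ (inv_all k)); eauto.
    eapply opTime_timeOf. apply own_all. lia.
  - exfalso. eapply (HTP k q t'); eauto.
Qed.

Fixpoint cnt (P : nat -> Prop) (N : nat) : nat := match N with
  | 0 => 0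
  | S m => cnt P m + (if excluded_middle_informative (P m) then 1 else 0) end.

Lemma cnt_mono P P' N : (forall q, q < N -> P' q -> P q) -> cnt P' N <= cnt P N.
Proof.
  induction N; simpl; intros H; auto.
  assert (cnt P' N <= cnt P N) by (apply IHN; intros; apply H; auto; lia).
  destruct (excluded_middle_informative (P' N)); destruct (excluded_middle_informative (P N)); try lia.
  exfalso; eauto.
Qed.

Lemma cnt_strict P P' N q0 : (forall q, q < N -> P' q -> P q) -> q0 < N -> P q0 -> ~ P' q0 ->
  cnt P' N < cnt P N.
Proof.
  induction N; simpl; intros H Hq HP HP'; [lia|].
  destruct (Nat.eq_dec q0 N) as [->|Hne].
  - assert (cnt P' N <= cnt P N) by (apply cnt_mono; intros; apply H; auto; lia).
    destruct (excluded_middle_informative (P' N)); destruct (excluded_middle_informative (P N)); try lia;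
    contradiction.
  - assert (cnt P' N < cnt P N) by (apply IHN; auto; try lia; intros; apply H; auto; lia).
    destruct (excluded_middle_informative (P' N)); destruct (excluded_middle_informative (P N)); try lia.
    exfalso; eauto.
Qed.

Lemma exec_step k : cfg (S k) = cfg k \/ exists q, sched k = Some q /\ stepP delta q (cfg k) (cfg (S k)).
Proof. pose proof (Hstep k) as Hs. destruct (sched k) as [q|]; simpl in Hs; eauto. Qed.

Section Gen.
Variable E : Aval OP.
Variable T1 : nat.
Hypothesis HT1 : n4 <= T1.
Hypothesis HE : forall k, T1 <= k -> cA (cfg k) = E /\ ~ done (cfg k) (aent E).

Lemma G1 j : T1 <= j -> sent (cS (cfg j)) <> aent E.
Proof.
  intros Hj HSj.
  assert (Hc : forall k, j <= k -> cS (cfg k) = cS (cfg j)).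
  { induction 1; auto.
    destruct (exec_step m) as [A|[q [Hq Hs]]]; [rewrite A; auto|].
    destruct (classic (cS (cfg (S m)) = cS (cfg m))) as [B|B]; [congruence|].
    destruct (S_change _ _ _ Hs B) as [o' [t' [s [a [s' [r' [C1 [C2 _]]]]]]]].
    exfalso. apply (proj2 (HE m ltac:(lia))).
    pose proof ((I6 _ (inv_all m)) q s) as H6. rewrite C1 in H6. specialize (H6 eq_refl).
    rewrite <- C2, IHle, HSj in H6. exact H6. }
  destruct (reach5 j ltac:(lia)) as [k5 [Hk5 Hs5]].
  destruct (advance p k5 Hio) as [j5 [Hj5a [Hj5b [_ Hj5d]]]].
  pose proof (tr5 _ _ _ _ _ Hj5d ltac:(rewrite Hj5b; exact Hs5)) as A6.
  destruct (advance p (S j5) Hio) as [j6 [Hj6a [Hj6b [_ Hj6d]]]].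
  pose proof (tr6 _ _ _ _ _ _ Hj6d ltac:(rewrite Hj6b; exact A6)) as A7.
  pose proof ((I6 _ (inv_all (S j6))) p (cS (cfg j5))) as H6. rewrite A7 in H6. specialize (H6 eq_refl).
  apply (proj2 (HE (S j6) ltac:(lia))). rewrite Hc in H6 by lia. rewrite HSj in H6. exact H6.
Qed.

Section Gen2.
Variable N : nat.
Hypothesis HN : forall q, N <= q -> cL (cfg T1) q = Idle.

Definition stale k q := exists a, aOf (cL (cfg k) q) = Some a /\ a <> E.

Lemma stale_back k q : T1 <= k -> stale (S k) q -> stale k q.
Proof.
  intros Hk [a [Ha Hne]].
  destruct (exec_step k) as [A|[q' [Hq Hs]]]; [rewrite A in Ha; exists a; auto|].
  destruct (Nat.eq_dec q' q) as [->|Hqq].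
  - destruct (aOf_step _ _ _ Hs) as [B|[B|B]]; rewrite B in Ha.
    + discriminate.
    + exists a; auto.
    + injection Ha as <-. exfalso. apply Hne. apply (HE k Hk).
  - rewrite (step_other _ _ _ _ Hs) in Ha by auto. exists a; auto.
Qed.

Lemma stale_lt k q : T1 <= k -> stale k q -> q < N.
Proof.
  induction 1; intros Hst.
  - destruct (le_lt_dec N q) as [Hq|Hq]; auto.
    destruct Hst as [a [Ha _]]. rewrite HN in Ha by auto. discriminate.
  - apply IHle. apply stale_back; auto.
Qed.

Definition mu k := cnt (stale k) N.

Lemma mu_le1 k : T1 <= k -> mu (S k) <= mu k.
Proof. intros Hk. apply cnt_mono. intros q _ H. apply stale_back; auto. Qed.

Lemma mu_lt1 k : T1 <= k -> cS (cfg (S k)) <> cS (cfg k) -> mu (S k) < mu k.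
Proof.
  intros Hk HS.
  destruct (exec_step k) as [A|[q [Hq Hs]]]; [rewrite A in HS; congruence|].
  destruct (S_change _ _ _ Hs HS) as [o' [t' [s [a [s' [r' [C1 [C2 [C3 C4]]]]]]]]].
  assert (Hst : stale k q).
  { exists a. rewrite C1. split; auto. intros ->. apply (G1 (S k)); [lia|].
    rewrite C3. reflexivity. }
  apply (cnt_strict _ _ _ q).
  - intros q' _ H. apply stale_back; auto.
  - eapply stale_lt; eauto.
  - exact Hst.
  - intros [a' [Ha' _]]. rewrite C4 in Ha'. discriminate.
Qed.

Lemma mu_range a b : T1 <= a -> a <= b -> mu b <= mu a /\ (cS (cfg b) <> cS (cfg a) -> mu b < mu a).
Proof.
  intros Ha. induction 1.
  - split; auto. intros H; congruence.
  - destruct IHle as [I1' I2'].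
    pose proof (mu_le1 m ltac:(lia)).
    split; [lia|]. intros HS.
    destruct (classic (cS (cfg (S m)) = cS (cfg m))) as [B|B].
    + rewrite B in HS. specialize (I2' HS). lia.
    + pose proof (mu_lt1 m ltac:(lia) B). lia.
Qed.

Lemma G4 k : T1 <= k -> cL (cfg k) p = At5 o t ->
  exists k', k < k' /\ cL (cfg k') p = At5 o t /\ mu k' < mu k.
Proof.
  intros Hk A5.
  destruct (advance p k Hio) as [j5 [Hj5a [Hj5b [_ Hj5d]]]].
  pose proof (tr5 _ _ _ _ _ Hj5d ltac:(rewrite Hj5b; exact A5)) as A6.
  set (snap := cS (cfg j5)) in *.
  destruct (advance p (S j5) Hio) as [j6 [Hj6a [Hj6b [_ Hj6d]]]].
  pose proof (tr6 _ _ _ _ _ _ Hj6d ltac:(rewrite Hj6b; exact A6)) as A7.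
  destruct (advance p (S j6) Hio) as [j7 [Hj7a [Hj7b [_ Hj7d]]]].
  pose proof (proj1 (tr7 _ _ _ _ _ _ Hj7d ltac:(rewrite Hj7b; exact A7))) as A8.
  destruct (advance p (S j7) Hio) as [j8 [Hj8a [Hj8b [_ Hj8d]]]].
  pose proof (tr8 _ _ _ _ _ _ Hj8d ltac:(rewrite Hj8b; exact A8)) as A9.
  rewrite (proj1 (HE j8 ltac:(lia))) in A9.
  destruct (advance p (S j8) Hio) as [j9 [Hj9a [Hj9b [_ Hj9d]]]].
  pose proof (tr9 _ _ _ _ _ _ _ Hj9d ltac:(rewrite Hj9b; exact A9)) as A10.
  assert (Hhv : deref (cfg j9) (snd E) = (fst (fst E), RNull)).
  { apply NNPP. intros F. apply (proj2 (HE j9 ltac:(lia))). exact F. }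
  rewrite Hhv in A10.
  destruct (advance p (S j9) Hio) as [j10 [Hj10a [Hj10b [_ Hj10d]]]].
  destruct (tr10 _ _ _ _ _ _ _ _ Hj10d ltac:(rewrite Hj10b; exact A10)) as [[_ A11]|[F _]];
    [|exfalso; apply F; reflexivity].
  destruct (advance p (S j10) Hio) as [j11 [Hj11a [Hj11b [_ Hj11d]]]].
  destruct (tr11 _ _ _ _ _ _ _ Hj11d ltac:(rewrite Hj11b; exact A11)) as [s' [r' A12]].
  destruct (advance p (S j11) Hio) as [j12 [Hj12a [Hj12b [_ Hj12d]]]].
  destruct (tr12 _ _ _ _ _ _ _ _ _ Hj12d ltac:(rewrite Hj12b; exact A12)) as [[[B1 B2]|[B1 B2]] A4].
  { exfalso. apply (G1 (S j12)); [lia|]. rewrite B2. reflexivity. }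
  assert (Hmu1 : mu j12 < mu j5).
  { apply (mu_range j5 j12); [lia|lia|]. exact B1. }
  pose proof (proj1 (mu_range k j5 ltac:(lia) Hj5a)) as Hmu0.
  pose proof (mu_le1 j12 ltac:(lia)) as Hmu2.
  destruct (advance p (S j12) Hio) as [j4 [Hj4a [Hj4b [_ Hj4d]]]].
  destruct (tr4 _ _ _ _ _ Hj4d ltac:(rewrite Hj4b; exact A4)) as [[_ A5']|[F _]].
  - pose proof (proj1 (mu_range (S j12) (S j4) ltac:(lia) ltac:(lia))) as Hmu3.
    exists (S j4). split; [lia|]. split; auto. lia.
  - exfalso. apply (notD j4); [lia|]. exact F.
Qed.

End Gen2.

Lemma generic_false : False.
Proof.
  destruct (active_bound T1) as [N HN].
  destruct (reach5 T1 HT1) as [k0 [Hk0 A5]].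
  assert (H : forall m k, T1 <= k -> cL (cfg k) p = At5 o t -> mu N k <= m -> False).
  { induction m as [m IHm] using lt_wf_ind. intros k Hk Ak Hm.
    destruct (G4 N HN k Hk Ak) as [k' [Hk' [Ak' Hmu]]].
    apply (IHm (mu N k') ltac:(lia) k'); auto. lia. }
  eapply H; eauto.
Qed.

End Gen.

Lemma done_exec k e : storedIn (cfg k) e -> done (cfg k) e -> done (cfg (S k)) e.
Proof.
  intros Hs Hd. destruct (exec_step k) as [A|[q [_ Hq]]]; [rewrite A; auto|].
  eapply done_step; eauto. apply inv_all.
Qed.

Section Live3.
Variable T0 : nat.
Hypothesis HT0 : n4 <= T0.
Hypothesis Hset : forall k q t', T0 <= k -> q <> p -> sched k = Some q ->
  timeOf (cL (cfg k) q) = Some t' -> t < t'.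

Definition pE : Aval OP := (t, AOp o, PH p).

Lemma Achange_exec k : cA (cfg (S k)) <> cA (cfg k) -> exists q, sched k = Some q /\
  ((exists o' t' s, cL (cfg k) q = At7 o' t' s /\ t' < fst (fst (cA (cfg k))) /\ cA (cfg (S k)) = (t', AOp o', PH q)) \/
  (exists o' t' s a, cL (cfg k) q = At13 o' t' s a /\ cA (cfg k) = a /\ cA (cfg (S k)) = (t', AOp o', PH q))).
Proof.
  intros H. destruct (exec_step k) as [A|[q [Hq Hs]]]; [rewrite A in H; congruence|].
  exists q; split; auto. eapply A_change; eauto.
Qed.

Lemma newA_time k q o' t' (l : L) : T0 <= k -> sched k = Some q -> cL (cfg k) q = l ->
  opTime l = Some (o', t') -> (q = p /\ o' = o /\ t' = t) \/ (q <> p /\ t < t').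
Proof.
  intros Hk Hq Hl Ho. destruct (Nat.eq_dec q p) as [->|Hne].
  - left. pose proof (own_all k ltac:(lia)) as Hown'. rewrite Hl, Ho in Hown'. injection Hown' as -> ->. auto.
  - right. split; auto. eapply Hset; eauto. rewrite Hl. eapply opTime_timeOf; eauto.
Qed.

Lemma Aphase k : T0 <= k -> fst (fst (cA (cfg k))) <= t ->
  cA (cfg k) = pE \/ forall j, T0 <= j <= k -> cA (cfg j) = cA (cfg T0).
Proof.
  induction 1; intros Ht.
  - right. intros j Hj. assert (j = T0) as -> by lia. auto.
  - destruct (classic (cA (cfg (S m)) = cA (cfg m))) as [B|B].
    + rewrite B in Ht |- *. destruct (IHle Ht) as [C|C]; auto.
      right. intros j Hj. destruct (Nat.eq_dec j (S m)) as [->|Hne]; [rewrite B; apply C; lia|].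
      apply C; lia.
    + destruct (Achange_exec m B) as [q [Hq [[o' [t' [s [C1 [C2 C3]]]]]|[o' [t' [s [a [C1 [C2 C3]]]]]]]]];
      rewrite C3 in Ht |- *; simpl in Ht;
      (destruct (newA_time m q o' t' _ H Hq C1 eq_refl) as [[-> [-> ->]]|[_ F]]; [left; reflexivity|lia]).
Qed.

Lemma pE_persist k : T0 <= k -> cA (cfg k) = pE -> cA (cfg (S k)) = pE.
Proof.
  intros Hk HA. apply NNPP. intros B. rewrite <- HA in B.
  destruct (Achange_exec k B) as [q [Hq [[o' [t' [s [C1 [C2 C3]]]]]|[o' [t' [s [a [C1 [C2 C3]]]]]]]]].
  - rewrite HA in C2. simpl in C2.
    destruct (newA_time k q o' t' _ Hk Hq C1 eq_refl) as [[_ [_ ->]]|[_ F]]; lia.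
  - pose proof ((I7 _ (inv_all k)) q) as H7. rewrite C1 in H7. simpl in H7.
    rewrite <- C2, HA in H7. apply (notD k); [lia|]. exact H7.
Qed.

Lemma existsPE : exists k1, T0 <= k1 /\ cA (cfg k1) = pE.
Proof.
  apply NNPP. intros Hno'.
  assert (Hno : forall k, T0 <= k -> cA (cfg k) <> pE) by (intros k Hk HA; apply Hno'; eauto).
  assert (Hconst : forall k, T0 <= k -> cA (cfg k) = cA (cfg T0)).
  { intros k Hk.
    destruct (reach5 k ltac:(lia)) as [k5 [Hk5 A5]].
    destruct (advance p k5 Hio) as [j5 [Hj5a [Hj5b [_ Hj5d]]]].
    pose proof (tr5 _ _ _ _ _ Hj5d ltac:(rewrite Hj5b; exact A5)) as A6.
    destruct (advance p (S j5) Hio) as [j6 [Hj6a [Hj6b [_ Hj6d]]]].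
    pose proof (tr6 _ _ _ _ _ _ Hj6d ltac:(rewrite Hj6b; exact A6)) as A7.
    destruct (advance p (S j6) Hio) as [j7 [Hj7a [Hj7b [_ Hj7d]]]].
    destruct (tr7 _ _ _ _ _ _ Hj7d ltac:(rewrite Hj7b; exact A7)) as [_ B].
    destruct (Nat.ltb_spec t (fst (fst (cA (cfg j7))))) as [C|C].
    - exfalso. apply (Hno (S j7)); [lia|]. exact B.
    - destruct (Aphase j7 ltac:(lia) C) as [D|D].
      + exfalso; apply (Hno j7); [lia|exact D].
      + apply D; lia. }
  set (X0 := cA (cfg T0)) in *.
  destruct (classic (exists kd, T0 <= kd /\ done (cfg kd) (aent X0))) as [[kd [Hkd Hd]]|Hnd].
  - assert (Hdall : forall k, kd <= k -> done (cfg k) (aent X0)).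
    { induction 1; auto. apply done_exec; auto. left. rewrite Hconst by lia. reflexivity. }
    destruct (reach5 kd ltac:(lia)) as [k5 [Hk5 A5]].
    destruct (advance p k5 Hio) as [j5 [Hj5a [Hj5b [_ Hj5d]]]].
    pose proof (tr5 _ _ _ _ _ Hj5d ltac:(rewrite Hj5b; exact A5)) as A6.
    destruct (advance p (S j5) Hio) as [j6 [Hj6a [Hj6b [_ Hj6d]]]].
    pose proof (tr6 _ _ _ _ _ _ Hj6d ltac:(rewrite Hj6b; exact A6)) as A7.
    destruct (advance p (S j6) Hio) as [j7 [Hj7a [Hj7b [_ Hj7d]]]].
    pose proof (proj1 (tr7 _ _ _ _ _ _ Hj7d ltac:(rewrite Hj7b; exact A7))) as A8.
    destruct (advance p (S j7) Hio) as [j8 [Hj8a [Hj8b [_ Hj8d]]]].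
    pose proof (tr8 _ _ _ _ _ _ Hj8d ltac:(rewrite Hj8b; exact A8)) as A9.
    rewrite (Hconst j8 ltac:(lia)) in A9.
    destruct (advance p (S j8) Hio) as [j9 [Hj9a [Hj9b [_ Hj9d]]]].
    pose proof (tr9 _ _ _ _ _ _ _ Hj9d ltac:(rewrite Hj9b; exact A9)) as A10.
    destruct (advance p (S j9) Hio) as [j10 [Hj10a [Hj10b [_ Hj10d]]]].
    destruct (tr10 _ _ _ _ _ _ _ _ Hj10d ltac:(rewrite Hj10b; exact A10)) as [[F _]|[_ A13]].
    { exfalso. apply (Hdall j9); [lia|]. exact F. }
    destruct (advance p (S j10) Hio) as [j13 [Hj13a [Hj13b [_ Hj13d]]]].
    destruct (tr13 _ _ _ _ _ _ _ Hj13d ltac:(rewrite Hj13b; exact A13)) as [[[B1 B2]|[B1 B2]] _].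
    + apply (Hno (S j13)); [lia|exact B2].
    + apply B1. apply Hconst. lia.
  - apply (generic_false X0 T0 HT0). intros k Hk. split; [apply Hconst; auto|].
    intros Hd. apply Hnd. eauto.
Qed.

Lemma live3_false : False.
Proof.
  destruct existsPE as [k1 [Hk1 HA]].
  assert (Hall : forall k, k1 <= k -> cA (cfg k) = pE).
  { induction 1; auto. apply pE_persist; auto. lia. }
  apply (generic_false pE k1 ltac:(lia)). intros k Hk. split; [apply Hall; auto|].
  exact (notD k ltac:(lia)).
Qed.

End Live3.

Lemma live2_false : False.
Proof. destruct settled as [T0 [HT0 Hset]]. exact (live3_false T0 HT0 Hset). Qed.

End Live2.

Lemma live_false : False.
Proof.
  destruct (reach4 n ltac:(lia)) as [n4 [Hn4 Hat4]].
  exact (live2_false n4 Hn4 Hat4).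
Qed.

End Live.

Lemma Ptime_all t : Ptime t.
Proof.
  induction t as [t IH] using lt_wf_ind.
  intros p n Ht Hio. apply NNPP. intros Hcon.
  destruct (timeOf_opTime _ _ Ht) as [o Ho].
  apply (live_false p n t o); auto.
  intros k Hk Hs H14. apply Hcon. eauto.
Qed.

Lemma main_exec p n : cL (cfg n) p <> Idle -> sched_io p ->
  exists k, n <= k /\ sched k = Some p /\ is_at14 (cL (cfg k) p).
Proof.
  intros Hn Hio.
  destruct (timeOf (cL (cfg n) p)) as [t|] eqn:Ht.
  - apply (Ptime_all t p n Ht Hio).
  - destruct (cL (cfg n) p) as [|o| | | | | | | | | | | |] eqn:Hl; simpl in Ht; try discriminate; [contradiction|].
    destruct (advance p n Hio) as [j [Hj1 [Hj2 [_ Hj4]]]].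
    unfold stepP in Hj4. rewrite Hj2, Hl in Hj4.
    assert (Ht' : timeOf (cL (cfg (S j)) p) = Some (cC (cfg j))).
    { rewrite Hj4. simpl. rewrite upd_eq. reflexivity. }
    destruct (Ptime_all _ p (S j) Ht' Hio) as [k [Hk1 Hk2]].
    exists k. split; [lia|auto].
Qed.
End Exec.
End Proofs.

Theorem mainTheorem1 (OP RES Q : Type) (delta : Q -> OP -> Q -> RES -> Prop)
  (s0 : Q) (H0 : nat -> Hval RES)
  (cfg : nat -> config OP RES Q) (sched : nat -> option nat) :
  cfg 0 = init OP s0 H0 ->
  (forall k, stepE delta (sched k) (cfg k) (cfg (S k))) ->
  forall (p n : nat),
    cL (cfg n) p <> Idle OP RES Q ->
    (forall m, exists k, m <= k /\ sched k = Some p) ->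
    exists k, n <= k /\ sched k = Some p /\ is_at14 (cL (cfg k) p).
Proof.
  intros Hinit Hstep p n Hn Hio.
  exact (main_exec OP RES Q delta cfg sched s0 H0 Hinit Hstep p n Hn Hio).
Qed.
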